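(* Let $n\ge1$, $R_0,R_1\in SO(n)$ and $h>0$. For each $t\in[0,h]$ let $A(t)=\frac{h-t}{h}R_0+\frac{t}{h}R_1$, and assume $A(t)$ is nonsingular for all $t\in[0,h]$. Let $A(t)=Q(t)Y(t)$ be the polar decomposition of $A(t)$, with $Q(t)$ orthogonal and $Y(t)$ symmetric positive definite. Then for $t\in[0,h]$, \[\dot Y(t)=Y(t)\,\mathrm{sym}\big(A(t)^{-1}\dot A(t)\big),\qquad \dot Q(t)=Q(t)\,\mathrm{skew}\big(A(t)^{-1}\dot A(t)\big).\]
   Context: $SO(n)=\{Q\in\mathbb{R}^{n\times n}:Q^TQ=I,\ \det Q>0\}$. For a square matrix $B$, $\mathrm{sym}(B)=\frac12(B+B^T)$ and $\mathrm{skew}(B)=\frac12(B-B^T)$. Overdots denote derivatives with respect to $t$. *)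

(* Defs.v *)
From HB Require Import structures.
From mathcomp Require Import all_boot all_order all_algebra.
From mathcomp Require Import all_classical all_reals all_analysis.
Set Implicit Arguments. Unset Strict Implicit. Unset Printing Implicit Defensive.
Import Order.TTheory GRing.Theory Num.Theory.
Import numFieldNormedType.Exports.
Local Open Scope classical_set_scope.
Local Open Scope ring_scope.

Definition orthogonal_mx (R : realType) (n : nat) (Q : 'M[R]_n) : Prop :=
  Q^T *m Q = 1%:M.

Definition SOmx (R : realType) (n : nat) (Q : 'M[R]_n) : Prop :=
  orthogonal_mx Q /\ 0 < \det Q.

Definition spd_mx (R : realType) (n : nat) (Y : 'M[R]_n) : Prop :=
  Y^T = Y /\ forall v : 'cV[R]_n, v != 0 -> 0 < (v^T *m Y *m v) 0 0.

Definition sym_mx (R : realType) (n : nat) (B : 'M[R]_n) : 'M[R]_n :=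
  2^-1 *: (B + B^T).
Definition skew_mx (R : realType) (n : nat) (B : 'M[R]_n) : 'M[R]_n :=
  2^-1 *: (B - B^T).

Definition is_deriv_within (R : realType) (V : normedModType R)
    (a b : R) (f : R -> V) (t : R) (df : V) : Prop :=
  (fun s : R => s^-1 *: (f (t + s) - f t))
    @ within [set s : R | s != 0 /\ a <= t + s <= b] (nbhs (0:R)) --> df.

(* Main.v *)
Require Import Defs.
From HB Require Import structures.
From mathcomp Require Import all_boot all_order all_algebra.
From mathcomp Require Import all_classical all_reals all_analysis.
From mathcomp Require Import ring lra.
Import Order.TTheory GRing.Theory Num.Theory.
Import numFieldNormedType.Exports.
Local Open Scope classical_set_scope.
Local Open Scope ring_scope.
Set Implicit Arguments. Unset Strict Implicit.

Lemma lim_by_bound (R : realType) (V : normedModType R) (a b t : R)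
  (g : R -> V) (l : V) (C : R) :
  (forall s, s != 0 -> a <= t + s <= b -> `|g s - l| <= C * `|s|) ->
  g @ within [set s : R | s != 0 /\ a <= t + s <= b] (nbhs (0:R)) --> l.
Proof.
move=> Hb.
apply/(@cvgrPdist_le _ _ _ (within [set s : R | s != 0 /\ a <= t + s <= b] (nbhs (0:R))) _ g l) => e e0.
have C1 : 0 < `|C| + 1 by rewrite ltr_pwDr // normr_ge0.
rewrite near_withinE; near=> s => -[s0 hs].
rewrite distrC (le_trans (Hb _ s0 hs)) //.
apply: (@le_trans _ _ ((`|C| + 1) * `|s|)).
  by apply: ler_wpM2r; [exact: normr_ge0| rewrite (le_trans (ler_norm C)) // lerDl].
rewrite -ler_pdivlMl //.
near: s.
have ep : 0 < (`|C| + 1)^-1 * e by rewrite mulr_gt0 // invr_gt0.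
exact: (@nbhs0_le R R^o _ ep).
Unshelve. all: by end_near. Qed.

Lemma derive1_affine (R : realType) (n : nat) (R0 R1 : 'M[R]_n) (h t : R) :
  0 < h ->
  derive1 (fun t : R => ((h - t) / h) *: R0 + (t / h) *: R1) t = h^-1 *: (R1 - R0).
Proof.
move=> h0; rewrite derive1E /derive.
apply: cvg_lim => //.
apply: cvg_near_cst.
near=> e.
have e0 : e != 0 by near: e; exact: nbhs_dnbhs_neq.
rewrite scaler1.
apply/matrixP => i j; rewrite !mxE.
rewrite /shift /=; field.
by rewrite e0 gt_eqF.
Unshelve. all: by end_near. Qed.

Definition fro2 (R : realType) (m n : nat) (F : 'M[R]_(m, n)) : R :=
  \sum_i \sum_j F i j ^+ 2.

Lemma qfE (R : realType) (n : nat) (Y : 'M[R]_n) (v : 'cV[R]_n) :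
  (v^T *m Y *m v) 0 0 = \sum_i \sum_k v i 0 * Y i k * v k 0.
Proof.
rewrite !mxE; under eq_bigr do rewrite !mxE big_distrl /=.
rewrite exchange_big; apply: eq_bigr => i _; apply: eq_bigr => k _.
by rewrite !mxE.
Qed.

Lemma vvE (R : realType) (n : nat) (v : 'cV[R]_n) :
  (v^T *m v) 0 0 = \sum_i v i 0 ^+ 2.
Proof. by rewrite !mxE; apply: eq_bigr => i _; rewrite !mxE expr2. Qed.

Lemma sylv (R : realType) (n : nat) (Y Z F G : 'M[R]_n) (lam : R) :
  0 < lam -> Y^T = Y ->
  (forall v : 'cV[R]_n, lam * (v^T *m v) 0 0 <= (v^T *m Y *m v) 0 0) ->
  (forall v : 'cV[R]_n, 0 <= (v^T *m Z *m v) 0 0) ->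
  Z *m F + F *m Y = G -> lam ^+ 2 * fro2 F <= fro2 G.
Proof.
move=> l0 Ys HY HZ HG.
pose S := \sum_i \sum_j F i j * G i j.
have SE : S = \sum_j ((col j F)^T *m Z *m col j F) 0 0
            + \sum_i (((row i F)^T)^T *m Y *m (row i F)^T) 0 0.
  rewrite /S -HG.
  under eq_bigr do under eq_bigr do rewrite !mxE mulrDr.
  under eq_bigr do rewrite big_split /=.
  rewrite big_split /=; congr (_ + _).
    rewrite exchange_big; apply: eq_bigr => j _; rewrite qfE.
    apply: eq_bigr => i _; rewrite big_distrr; apply: eq_bigr => k _ /=.
    by rewrite !mxE mulrA.
  apply: eq_bigr => i _; rewrite qfE.
  apply: eq_bigr => j _; rewrite big_distrr; apply: eq_bigr => k _ /=.
  have -> : Y k j = Y j k by rewrite -{1}Ys mxE.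
  by rewrite !mxE; ring.
have S1 : lam * fro2 F <= S.
  rewrite SE -[lam * _]add0r; apply: lerD.
    by apply: sumr_ge0 => j _; exact: HZ.
  rewrite /fro2 mulr_sumr; apply: ler_sum => i _.
  apply: le_trans (HY _); rewrite vvE; apply: ler_wpM2l; first exact: ltW.
  by rewrite le_eqVlt; apply/orP; left; apply/eqP/eq_bigr => j _; rewrite !mxE.
have S2 : 2 * lam * S <= lam ^+ 2 * fro2 F + fro2 G.
  rewrite /S /fro2 !mulr_sumr -big_split; apply: ler_sum => i _ /=.
  rewrite !mulr_sumr -big_split; apply: ler_sum => j _ /=.
  have h1 : 0 <= (lam * F i j - G i j) ^+ 2 by exact: sqr_ge0.
  nra.
nra.
Qed.

Lemma mxnorm_ge (R : realType) (m n : nat) (X : 'M[R]_(m, n)) i j :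
  `|X i j| <= `|X|.
Proof.
rewrite [leRHS]/Num.Def.normr /= mx_normrE.
by apply/bigmax_geP; right => /=; exists (i, j).
Qed.

Lemma mxnorm_le (R : realType) (m n : nat) (X : 'M[R]_(m, n)) (c : R) :
  0 <= c -> (forall i j, `|X i j| <= c) -> `|X| <= c.
Proof.
move=> c0 H; rewrite [leLHS]/Num.Def.normr /= mx_normrE.
by apply: bigmax_le => // -[i j] _; exact: H.
Qed.

Lemma mxnorm_mul (R : realType) (m n p : nat) (X : 'M[R]_(m, n)) (Y : 'M[R]_(n, p)) :
  `|X *m Y| <= n%:R * `|X| * `|Y|.
Proof.
apply: mxnorm_le.
  by rewrite mulr_ge0 // mulr_ge0.
move=> i j; rewrite mxE (le_trans (ler_norm_sum _ _ _)) //.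
apply: (@le_trans _ _ (\sum_(k < n) `|X| * `|Y|)).
  apply: ler_sum => k _; rewrite normrM.
  by apply: ler_pM => //; exact: mxnorm_ge.
by rewrite sumr_const card_ord -mulrA mulr_natl.
Qed.

Lemma fro2_ge (R : realType) (m n : nat) (X : 'M[R]_(m, n)) :
  `|X| ^+ 2 <= fro2 X.
Proof.
have [->|] := eqVneq `|X| 0.
  by rewrite expr0n /=; apply: sumr_ge0 => i _; apply: sumr_ge0 => j _; exact: sqr_ge0.
move=> /mx_norm_neq0 [[i j] /= Hn]; have -> : `|X| = `|X i j| by exact: Hn.
rewrite real_normK ?num_real //.
rewrite /fro2 (bigD1 i) //= (bigD1 j) //= -addrA lerDl.
apply: addr_ge0; first by apply: sumr_ge0 => k _; exact: sqr_ge0.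
by apply: sumr_ge0 => k _; apply: sumr_ge0 => l _; exact: sqr_ge0.
Qed.

Lemma fro2_le (R : realType) (m n : nat) (X : 'M[R]_(m, n)) :
  fro2 X <= (m * n)%:R * `|X| ^+ 2.
Proof.
apply: (@le_trans _ _ (\sum_(i < m) \sum_(j < n) `|X| ^+ 2)).
  apply: ler_sum => i _; apply: ler_sum => j _.
  rewrite -real_normK ?num_real //; apply: lerXn2r; rewrite ?nnegrE ?normr_ge0 //.
  exact: mxnorm_ge.
rewrite sumr_const card_ord sumr_const card_ord -mulrnA mulr_natl.
by rewrite mulnC.
Qed.

Lemma sylv_norm (R : realType) (n : nat) (Y Z F G : 'M[R]_n) (lam : R) :
  0 < lam -> Y^T = Y ->
  (forall v : 'cV[R]_n, lam * (v^T *m v) 0 0 <= (v^T *m Y *m v) 0 0) ->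
  (forall v : 'cV[R]_n, 0 <= (v^T *m Z *m v) 0 0) ->
  Z *m F + F *m Y = G -> lam * `|F| <= n%:R * `|G|.
Proof.
move=> l0 Ys HY HZ HG.
have H := sylv l0 Ys HY HZ HG.
have H1 := fro2_ge F; have H2 := fro2_le G.
have : (lam * `|F|) ^+ 2 <= (n%:R * `|G|) ^+ 2.
  rewrite !exprMn; apply: (le_trans (ler_wpM2l _ H1)); first exact: sqr_ge0.
  apply: (le_trans H); apply: (le_trans H2).
  by rewrite natrM -expr2.
rewrite ler_pXn2r // ?nnegrE ?mulr_ge0 ?normr_ge0 ?ler0n ?ltW //.
Qed.

Lemma vv_ge0 (R : realType) (n : nat) (v : 'cV[R]_n) : 0 <= (v^T *m v) 0 0.
Proof. by rewrite vvE; apply: sumr_ge0 => i _; exact: sqr_ge0. Qed.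

Lemma qf_expand (R : realType) (n : nat) (Y : 'M[R]_n) (u w : 'cV[R]_n) (x : R) :
  Y^T = Y ->
  ((u + x *: w)^T *m Y *m (u + x *: w)) 0 0 =
  (u^T *m Y *m u) 0 0 + 2 * x * (u^T *m Y *m w) 0 0 + x ^+ 2 * (w^T *m Y *m w) 0 0.
Proof.
move=> Ys.
have sw : w^T *m Y *m u = u^T *m Y *m w.
  rewrite -[in LHS](trmxK u) -{1}Ys -!trmx_mul mulmxA.
  by apply/matrixP => i j; rewrite !ord1 mxE.
have -> : (u + x *: w)^T = u^T + x *: w^T by apply/matrixP => i j; rewrite !mxE.
rewrite !mulmxDr -!scalemxAr !mulmxDl -!scalemxAl.
rewrite sw !mxE; ring.
Qed.

Lemma qf_CS (R : realType) (n : nat) (Y : 'M[R]_n) (u w : 'cV[R]_n) :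
  Y^T = Y -> (forall v : 'cV[R]_n, 0 <= (v^T *m Y *m v) 0 0) ->
  (forall v : 'cV[R]_n, v != 0 -> 0 < (v^T *m Y *m v) 0 0) ->
  ((u^T *m Y *m w) 0 0) ^+ 2 <= (u^T *m Y *m u) 0 0 * (w^T *m Y *m w) 0 0.
Proof.
move=> Ys psd pd.
have [->|w0] := eqVneq w 0.
  by rewrite !mulmx0 mxE expr0n /= mulr0.
have c0 := pd _ w0.
set a := (u^T *m Y *m u) 0 0; set b := (u^T *m Y *m w) 0 0.
set c := (w^T *m Y *m w) 0 0.
have := psd (u + (- b / c) *: w); rewrite qf_expand // -/a -/b -/c => H.
have E : a * c - b ^+ 2 = c * (a + 2 * (- b / c) * b + (- b / c) ^+ 2 * c).
  by field; rewrite gt_eqF.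
rewrite -subr_ge0 E; apply: mulr_ge0 => //; exact: ltW.
Qed.

Lemma qf_crude (R : realType) (n : nat) (W : 'M[R]_n) (v : 'cV[R]_n) :
  (v^T *m W *m v) 0 0 <= (\sum_i \sum_k `|W i k|) * (v^T *m v) 0 0.
Proof.
rewrite qfE mulr_suml; apply: ler_sum => i _; rewrite mulr_suml.
apply: ler_sum => k _.
have hi : v i 0 ^+ 2 <= (v^T *m v) 0 0.
  rewrite vvE (bigD1 i) //= lerDl; apply: sumr_ge0 => j _; exact: sqr_ge0.
have hk : v k 0 ^+ 2 <= (v^T *m v) 0 0.
  rewrite vvE (bigD1 k) //= lerDl; apply: sumr_ge0 => j _; exact: sqr_ge0.
have hik : v i 0 * v k 0 <= (v^T *m v) 0 0.
  have := sqr_ge0 (v i 0 - v k 0); nra.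
have hik' : - (v i 0 * v k 0) <= (v^T *m v) 0 0.
  have := sqr_ge0 (v i 0 + v k 0); nra.
have hW : 0 <= `|W i k| by [].
have hn : `|v i 0 * v k 0| <= (v^T *m v) 0 0 by rewrite ler_norml hik andbT lerNl.
have -> : v i 0 * W i k * v k 0 = W i k * (v i 0 * v k 0) by ring.
apply: (le_trans (ler_norm _)); rewrite normrM.
by apply: ler_wpM2l.
Qed.

Lemma pd_lam (R : realType) (n : nat) (Y : 'M[R]_n) :
  Y^T = Y -> (forall v : 'cV[R]_n, v != 0 -> 0 < (v^T *m Y *m v) 0 0) ->
  Y \in unitmx ->
  exists2 lam : R, 0 < lam &
    forall v : 'cV[R]_n, lam * (v^T *m v) 0 0 <= (v^T *m Y *m v) 0 0.
Proof.
move=> Ys pd Yu.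
have psd : forall v : 'cV[R]_n, 0 <= (v^T *m Y *m v) 0 0.
  move=> v; have [->|v0] := eqVneq v 0; first by rewrite !mulmx0 mxE.
  exact/ltW/pd.
set W := invmx Y.
have Ws : W^T = W by rewrite /W trmx_inv Ys.
set K := \sum_i \sum_k `|W i k|.
have K0 : 0 <= K by apply: sumr_ge0 => i _; apply: sumr_ge0.
exists (K + 1)^-1; first by rewrite invr_gt0 ltr_pwDr.
move=> v.
have := qf_CS v (W *m v) Ys psd pd.
have E1 : v^T *m Y *m (W *m v) = v^T *m v.
  by rewrite !mulmxA -[v^T *m Y *m W]mulmxA mulmxV // mulmx1.
have E2 : (W *m v)^T *m Y *m (W *m v) = v^T *m W *m v.
  by rewrite trmx_mul Ws -!mulmxA [Y *m (W *m v)]mulmxA mulmxV // mul1mx.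
rewrite E1 E2 => CS.
have Cr := qf_crude W v; rewrite -/K in Cr.
have q0 := psd v; have v0 := vv_ge0 v.
rewrite mulrC ler_pdivrMr ?ltr_pwDr //.
set a := (v^T *m v) 0 0 in CS Cr v0 *.
set q := (v^T *m Y *m v) 0 0 in CS q0 *.
have [a0|ap] := eqVneq a 0; first by rewrite a0 mulr_ge0 // addr_ge0.
have apos : 0 < a by rewrite lt_def ap.
have : a ^+ 2 <= q * (K * a) by apply: (le_trans CS); apply: ler_wpM2l.
nra.
Qed.

Lemma comm_sq (R : realType) (n : nat) (Y X : 'M[R]_n) (lam : R) :
  0 < lam -> Y^T = Y ->
  (forall v : 'cV[R]_n, lam * (v^T *m v) 0 0 <= (v^T *m Y *m v) 0 0) ->
  X *m (Y *m Y) = (Y *m Y) *m X -> X *m Y = Y *m X.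
Proof.
move=> l0 Ys HY HX.
have psd : forall v : 'cV[R]_n, 0 <= (v^T *m Y *m v) 0 0.
  move=> v; apply: (le_trans _ (HY v)); apply: mulr_ge0; [exact: ltW | exact: vv_ge0].
set E := X *m Y - Y *m X.
have HE : Y *m E + E *m Y = 0.
  rewrite /E mulmxBr mulmxBl !mulmxA -[X *m Y *m Y]mulmxA HX.
  by rewrite addrA subrK subrr.
have := sylv_norm l0 Ys HY psd HE.
rewrite normr0 mulr0 => H.
have : `|E| = 0.
  apply/le_anti; rewrite normr_ge0 andbT.
  by rewrite -(pmulr_rle0 _ l0).
by move/normr0_eq0/eqP; rewrite subr_eq0 => /eqP.
Qed.

Lemma trmx_lin (R : realType) (n : nat) (X V : 'M[R]_n) (a b : R) :
  (a *: X + b *: V)^T = a *: X^T + b *: V^T.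
Proof. by apply/matrixP => i j; rewrite !mxE. Qed.

Lemma AtA (R : realType) (n : nat) (X V : 'M[R]_n) (a b : R) :
  X^T *m X = 1%:M -> V^T *m V = 1%:M ->
  (a *: X + b *: V)^T *m (a *: X + b *: V)
  = (a ^+ 2 + b ^+ 2) *: 1%:M + (a * b) *: (X^T *m V + V^T *m X).
Proof.
move=> hX hV.
rewrite trmx_lin mulmxDl !mulmxDr -!scalemxAl -!scalemxAr !scalerA hX hV.
apply/matrixP => i j; rewrite !mxE; ring.
Qed.

Lemma AAt (R : realType) (n : nat) (X V : 'M[R]_n) (a b : R) :
  X *m X^T = 1%:M -> V *m V^T = 1%:M ->
  (a *: X + b *: V) *m (a *: X + b *: V)^T
  = (a ^+ 2 + b ^+ 2) *: 1%:M + (a * b) *: (X *m V^T + V *m X^T).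
Proof.
move=> hX hV.
rewrite trmx_lin mulmxDl !mulmxDr -!scalemxAl -!scalemxAr !scalerA hX hV.
apply/matrixP => i j; rewrite !mxE; ring.
Qed.

Lemma UN (R : realType) (n : nat) (X V : 'M[R]_n) :
  X^T *m X = 1%:M -> V^T *m V = 1%:M -> X *m X^T = 1%:M -> V *m V^T = 1%:M ->
  (V - X) *m (X^T *m V + V^T *m X) = (X *m V^T + V *m X^T) *m (V - X).
Proof.
move=> h1 h2 h3 h4.
rewrite !(mulmxBl, mulmxBr, mulmxDl, mulmxDr) !mulmxA h3 h4 -[X *m V^T *m V]mulmxA h2 -[V *m X^T *m X]mulmxA h1 !mul1mx !mulmx1.
apply/matrixP => i j; rewrite !mxE; ring.
Qed.

Lemma key_comm (R : realType) (n : nat) (X V : 'M[R]_n) (a b : R) :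
  X^T *m X = 1%:M -> V^T *m V = 1%:M -> X *m X^T = 1%:M -> V *m V^T = 1%:M ->
  (V - X) *m ((a *: X + b *: V)^T *m (a *: X + b *: V))
  = ((a *: X + b *: V) *m (a *: X + b *: V)^T) *m (V - X).
Proof.
move=> h1 h2 h3 h4.
rewrite AtA // AAt // [RHS]mulmxDl -![in RHS]scalemxAl mul1mx -UN //.
by rewrite [LHS]mulmxDr -![in LHS]scalemxAr mulmx1.
Qed.

Lemma orth_norm (R : realType) (n : nat) (Q : 'M[R]_n) :
  Q^T *m Q = 1%:M -> `|Q| <= 1.
Proof.
move=> hQ; apply: mxnorm_le => // i j.
have := congr1 (fun M : 'M[R]_n => M j j) hQ; rewrite !mxE eqxx /= mulr1n => H.
have : Q i j ^+ 2 <= 1.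
  rewrite -H (bigD1 i) //= mxE -expr2 lerDl.
  by apply: sumr_ge0 => k _; rewrite mxE -expr2 sqr_ge0.
move=> h2; rewrite ler_norml; apply/andP; split; nra.
Qed.

Lemma bnd (R : realType) (lam x y a k c : R) :
  0 < lam -> lam * x <= c * y -> y <= a * k -> 0 <= c -> x <= a * (c * k / lam).
Proof.
move=> l0 h1 h2 c0.
have : x <= c * y / lam by rewrite ler_pdivlMr // mulrC.
move/le_trans; apply.
rewrite !mulrA ler_pM2r ?invr_gt0 // [a * c]mulrC -mulrA.
by apply: ler_wpM2l.
Qed.

Lemma psd_of_pd (R : realType) (n : nat) (Y : 'M[R]_n) :
  (forall v : 'cV[R]_n, v != 0 -> 0 < (v^T *m Y *m v) 0 0) ->
  forall v : 'cV[R]_n, 0 <= (v^T *m Y *m v) 0 0.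
Proof.
move=> pd v; have [->|v0] := eqVneq v 0; first by rewrite !mulmx0 mxE.
exact/ltW/pd.
Qed.

Lemma F_eq (R : realType) (n : nat) (Y0 Y1 D Pd C : 'M[R]_n) (s : R) :
  s != 0 -> Y1 *m (Y1 - Y0) + (Y1 - Y0) *m Y0 = s *: Pd + s ^+ 2 *: C ->
  Y0 *m D + D *m Y0 = Pd ->
  Y1 *m (s^-1 *: (Y1 - Y0) - D) + (s^-1 *: (Y1 - Y0) - D) *m Y0
  = s *: C - (Y1 - Y0) *m D.
Proof.
move=> s0 HE DE.
rewrite mulmxBr mulmxBl -scalemxAr -scalemxAl.
have Y1D : Y1 *m D = Y0 *m D + (Y1 - Y0) *m D by rewrite -mulmxDl addrC subrK.
rewrite Y1D.
move: HE DE.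
move: (Y1 *m (Y1 - Y0)) ((Y1 - Y0) *m Y0) (Y0 *m D) (D *m Y0) ((Y1 - Y0) *m D)
  => a b c d e HE DE.
have hb : b = s *: Pd + s ^+ 2 *: C - a by rewrite -HE [a + b]addrC addrK.
have hd : d = Pd - c by rewrite -DE [c + d]addrC addrK.
rewrite hb hd; apply/matrixP => i j; rewrite !mxE; field.
by [].
Qed.

Lemma Q_eq (R : realType) (n : nat) (Q0 Q1 Y0 Y1 D W Ad Dq : 'M[R]_n) (s : R) :
  s != 0 ->
  Q1 - Q0 = (s *: Ad - Q1 *m (Y1 - Y0)) *m W ->
  Dq = (Ad - Q0 *m D) *m W ->
  s^-1 *: (Q1 - Q0) - Dq
  = - (((Q1 - Q0) *m D + Q1 *m (s^-1 *: (Y1 - Y0) - D)) *m W).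
Proof.
move=> s0 HQ HD.
rewrite {1}HQ HD -[in RHS]mulNmx scalemxAl -mulmxBl; congr (_ *m W).
rewrite mulmxBl !mulmxBr -scalemxAr mulmxBr.
move: (Q1 *m Y1) (Q1 *m Y0) (Q1 *m D) (Q0 *m D) => a b c d.
apply/matrixP => i j; rewrite !mxE; field.
by [].
Qed.

Lemma m3 (R : realType) (a c x s y : R) :
  0 <= a -> 0 <= c -> x <= s * y -> a * x * c <= s * (a * y * c).
Proof.
move=> a0 c0 h.
have : a * x * c <= a * (s * y) * c by apply: ler_wpM2r => //; apply: ler_wpM2l.
by move/le_trans; apply; rewrite le_eqVlt; apply/orP; left; apply/eqP; ring.
Qed.

Theorem lemma3p1 (R : realType) (n : nat) (R0 R1 : 'M[R]_n) (h : R)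
  (Q Y : R -> 'M[R]_n) :
  (0 < n)%N -> SOmx R0 -> SOmx R1 -> 0 < h ->
  let A : R -> 'M[R]_n := fun t : R => ((h - t) / h) *: R0 + (t / h) *: R1 in
  (forall t, 0 <= t <= h -> A t \in unitmx) ->
  (forall t, 0 <= t <= h ->
     A t = Q t *m Y t /\ orthogonal_mx (Q t) /\ spd_mx (Y t)) ->
  forall t, 0 <= t <= h ->
    is_deriv_within 0 h Y t (Y t *m sym_mx (invmx (A t) *m derive1 A t)) /\
    is_deriv_within 0 h Q t (Q t *m skew_mx (invmx (A t) *m derive1 A t)).
Proof.
move=> n0 [oR0 _] [oR1 _] h0 A Au HQY t ht.
rewrite /orthogonal_mx in oR0 oR1.
have oR0' : R0 *m R0^T = 1%:M by apply: mulmx1C.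
have oR1' : R1 *m R1^T = 1%:M by apply: mulmx1C.
set Ad := h^-1 *: (R1 - R0).
have dA : derive1 A t = Ad by exact: derive1_affine.
rewrite dA.
have Ashift : forall s, A (t + s) = A t + s *: Ad.
  by move=> s; apply/matrixP => i j; rewrite /A /Ad !mxE; field; rewrite gt_eqF.
have Akey : Ad *m ((A t)^T *m A t) = (A t *m (A t)^T) *m Ad.
  by rewrite /Ad -scalemxAl -scalemxAr /A key_comm.
have PY : forall u, 0 <= u <= h -> (A u)^T *m A u = Y u *m Y u.
  move=> u hu; have [-> [oQ [Ys _]]] := HQY u hu.
  by rewrite trmx_mul -mulmxA (mulmxA (Q u)^T) oQ mul1mx Ys.
have [AQY0 [oQ0 [Ys0 Ypd0]]] := HQY t ht.
have A0u := Au t ht.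
have P0 := PY t ht.
set Y0 := Y t in AQY0 Ys0 Ypd0 P0 *.
set Q0 := Q t in AQY0 oQ0 *.
set A0 := A t in A0u AQY0 Akey P0 *.
have Yu : Y0 \in unitmx.
  by move: A0u; rewrite AQY0 !unitmxE det_mulmx unitrM => /andP[_ ->].
have [lam l0 Hlam] := pd_lam Ys0 Ypd0 Yu.
set K := invmx A0 *m Ad.
have KP : K *m (Y0 *m Y0) = (Y0 *m Y0) *m K.
  rewrite -P0 /K -mulmxA Akey.
  by rewrite -mulmxA mulKmx // -mulmxA mulKVmx.
have hYK : K *m Y0 = Y0 *m K := comm_sq l0 Ys0 Hlam KP.
have hYKt : K^T *m Y0 = Y0 *m K^T.
  by have := congr1 trmx hYK; rewrite !trmx_mul Ys0 => ->.
have hS : sym_mx K *m Y0 = Y0 *m sym_mx K.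
  by rewrite /sym_mx -scalemxAl -scalemxAr mulmxDl mulmxDr hYK hYKt.
have hSk : skew_mx K *m Y0 = Y0 *m skew_mx K.
  by rewrite /skew_mx -scalemxAl -scalemxAr mulmxBl mulmxBr hYK hYKt.
set D := Y0 *m sym_mx K.
set Pd := A0^T *m Ad + Ad^T *m A0.
set C := Ad^T *m Ad.
have MK : (Y0 *m Y0) *m K = A0^T *m Ad.
  by rewrite -P0 /K -mulmxA mulKVmx.
have MKt : (Y0 *m Y0) *m K^T = Ad^T *m A0.
  have MT : (Y0 *m Y0)^T = Y0 *m Y0 by rewrite trmx_mul Ys0.
  by rewrite -{1}MT -trmx_mul KP MK trmx_mul trmxK.
have DE : Y0 *m D + D *m Y0 = Pd.
  have -> : D *m Y0 = Y0 *m Y0 *m sym_mx K by rewrite /D -mulmxA hS mulmxA.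
  rewrite /D mulmxA -mulmxDr.
  have -> : sym_mx K + sym_mx K = K + K^T.
    by apply/matrixP => i j; rewrite /sym_mx !mxE; field.
  by rewrite mulmxDr MK MKt.
set W := invmx Y0.
have HDq : Q0 *m skew_mx K = (Ad - Q0 *m D) *m W.
  have DqY : Q0 *m skew_mx K *m Y0 = Ad - Q0 *m D.
    rewrite -mulmxA hSk /D !mulmxA -AQY0.
    have -> : skew_mx K = K - sym_mx K.
      by apply/matrixP => i j; rewrite /sym_mx /skew_mx !mxE; field.
    by rewrite mulmxBr /K mulKVmx.
  by rewrite -DqY mulmxK.
have nn : 0 <= n%:R :> R by exact: ler0n.
set kE := `|Pd| + h * `|C|.
set cD := n%:R * kE / lam.
set kG := `|C| + n%:R * cD * `|D|.
set cF := n%:R * kG / lam.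
set cQ := n%:R * (`|Ad| + n%:R * cD) * `|W|.
set c2 := n%:R * (n%:R * cQ * `|D| + n%:R * cF) * `|W|.
have h0' : 0 <= h := ltW h0.
have il : 0 <= lam^-1 by rewrite invr_ge0 ltW.
have cD0 : 0 <= cD.
  apply: mulr_ge0 => //; apply: mulr_ge0 => //; apply: addr_ge0 => //; apply: mulr_ge0 => //; apply: mulr_ge0 => //.
have cF0 : 0 <= cF.
  apply: mulr_ge0 => //; apply: mulr_ge0 => //; apply: addr_ge0 => //; apply: mulr_ge0 => //; apply: mulr_ge0 => //.
have key : forall s, s != 0 -> 0 <= t + s <= h ->
  (`|s^-1 *: (Y (t + s) - Y0) - D| <= `|s| * cF) /\
  (`|s^-1 *: (Q (t + s) - Q0) - Q0 *m skew_mx K| <= `|s| * c2).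
  move=> s s0 hu.
  have hsh : `|s| <= h.
    move: (ht) (hu) => /andP[t0 th] /andP[ts0 tsh]; rewrite ler_norml; apply/andP; split; lra.
  have [AQY1 [oQ1 [Ys1 Ypd1]]] := HQY _ hu.
  have P1 := PY _ hu.
  set Y1 := Y (t + s) in AQY1 Ys1 Ypd1 P1 *.
  set Q1 := Q (t + s) in AQY1 oQ1 *.
  have HE : Y1 *m (Y1 - Y0) + (Y1 - Y0) *m Y0 = s *: Pd + s ^+ 2 *: C.
    rewrite mulmxBr mulmxBl addrA subrK -P1 -P0 Ashift -/A0.
    have -> : (A0 + s *: Ad)^T = A0^T + s *: Ad^T by apply/matrixP => i j; rewrite !mxE.
    rewrite /Pd /C mulmxDl !mulmxDr -!scalemxAl -!scalemxAr.
    move: (A0^T *m A0) (A0^T *m Ad) (Ad^T *m A0) (Ad^T *m Ad) => a b c d.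
    by apply/matrixP => i j; rewrite !mxE; ring.
  have psd1 := psd_of_pd Ypd1.
  have bD := sylv_norm l0 Ys0 Hlam psd1 HE.
  have hE : `|s *: Pd + s ^+ 2 *: C| <= `|s| * kE.
    rewrite (le_trans (ler_normD _ _)) // !normrZ /kE mulrDr lerD2l.
    by rewrite -mulrA ler_wpM2l // ler_wpM2r.
  have dD : `|Y1 - Y0| <= `|s| * cD := bnd l0 bD hE nn.
  have HF := F_eq s0 HE DE.
  have bF := sylv_norm l0 Ys0 Hlam psd1 HF.
  have hG : `|s *: C - (Y1 - Y0) *m D| <= `|s| * kG.
    rewrite (le_trans (ler_normB _ _)) // normrZ /kG mulrDr lerD2l.
    apply: (le_trans (mxnorm_mul _ _)); exact: m3.
  have dF : `|s^-1 *: (Y1 - Y0) - D| <= `|s| * cF := bnd l0 bF hG nn.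
  split => //.
  have HQ1 : Q1 - Q0 = (s *: Ad - Q1 *m (Y1 - Y0)) *m W.
    have e : (Q1 - Q0) *m Y0 = s *: Ad - Q1 *m (Y1 - Y0).
      rewrite mulmxBl mulmxBr -AQY1 -AQY0 Ashift -/A0.
      move: (Q1 *m Y0) => a; apply/matrixP => i j; rewrite !mxE; ring.
    by rewrite -e mulmxK.
  have nQ1 : `|Q1| <= 1 := orth_norm oQ1.
  have dQ : `|Q1 - Q0| <= `|s| * cQ.
    rewrite {1}HQ1 /cQ; apply: (le_trans (mxnorm_mul _ _)).
    have : `|s *: Ad - Q1 *m (Y1 - Y0)| <= `|s| * (`|Ad| + n%:R * cD).
      rewrite (le_trans (ler_normB _ _)) // normrZ mulrDr lerD2l.
      apply: (le_trans (mxnorm_mul _ _)).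
      apply: (@le_trans _ _ (n%:R * 1 * `|Y1 - Y0|)).
        by apply: ler_wpM2r => //; apply: ler_wpM2l.
      by rewrite mulr1 mulrCA; apply: ler_wpM2l.
    move=> hX.
    by apply: m3.
  rewrite (Q_eq s0 HQ1 HDq) normrN.
  apply: (le_trans (mxnorm_mul _ _)); rewrite /c2; apply: m3 => //.
  rewrite (le_trans (ler_normD _ _)) // mulrDr; apply: lerD.
    by apply: (le_trans (mxnorm_mul _ _)); apply: m3.
  apply: (le_trans (mxnorm_mul _ _)).
  apply: (@le_trans _ _ (n%:R * 1 * `|s^-1 *: (Y1 - Y0) - D|)).
    by apply: ler_wpM2r => //; apply: ler_wpM2l.
  by rewrite mulr1 mulrCA; apply: ler_wpM2l.
split; rewrite /is_deriv_within.
  apply: (lim_by_bound (C := cF)) => s s0 hs.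
  by rewrite mulrC; exact: (key s s0 hs).1.
apply: (lim_by_bound (C := c2)) => s s0 hs.
by rewrite mulrC; exact: (key s s0 hs).2.
Qed.
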